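(* Let $k$ be a positive integer and $L\in\mathcal L_k$. Place each vertex of $V$ at the corresponding point of $\mathbb Q\cup\{\infty\}\subset\mathbb R\cup\{\infty\}=\partial_\infty\mathbb H$ of the hyperbolic plane $\mathbb H$ (upper half-plane model), and draw each edge of $\mathcal F_k$ whose two endpoints both lie in $\phi_k^{-1}(L)$ as the hyperbolic geodesic joining its endpoints. Then any two distinct such geodesics are disjoint in $\mathbb H$; that is, this drawing is a planar embedding of the subgraph of $\mathcal F_k$ induced on $\phi_k^{-1}(L)$.
   Context: The vertex set $V$ consists of all reduced fractions $p/q$ with $p,q\in\mathbb Z$, $\gcd(p,q)=1$, together with $1/0$ (identified with $\infty$); here $p/q$ and $(-p)/(-q)$ denote the same vertex. For vertices define $d(p/q,a/b)=|pb-qa|$. The graph $\mathcal F_k$ has vertex set $V$, with an edge between $p/q$ and $a/b$ exactly when $d(p/q,a/b)=k$. An element $(a,b)\in(\mathbb Z/k\mathbb Z)^2$ is admissible if for $\lambda\in\mathbb Z/k\mathbb Z$, $(\lambda a,\lambda b)=0$ implies $\lambda=0$; $\mathcal L_k$ is the set of admissible elements modulo $v\sim\lambda v$ for units $\lambda\in(\mathbb Z/k\mathbb Z)^*$; $\phi_k:V\to\mathcal L_k$ sends $p/q$ to the class of $(p\bmod k,q\bmod k)$. *)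

(* Defs.v *)
From mathcomp Require Import all_boot all_order all_algebra all_reals.
Set Implicit Arguments. Unset Strict Implicit. Unset Printing Implicit Defensive.
Import Order.TTheory GRing.Theory Num.Theory.
Local Open Scope ring_scope.

(* A vertex p/q is represented by an integer pair (p, q) with gcd(p,q) = 1;
   (p,q) and (-p,-q) denote the same vertex; (1,0) ~ (-1,0) is infinity. *)
Definition vtx := (int * int)%type.
Definition is_vertex (v : vtx) : Prop := coprimez v.1 v.2.
Definition same_vertex (u v : vtx) : Prop := u = v \/ u = (- v.1, - v.2).

Definition dist (u v : vtx) : int := `|u.1 * v.2 - u.2 * v.1|.

Definition Fk_edge (k : int) (u v : vtx) : Prop := dist u v = k.

Definition admissible (k a b : int) : Prop :=
  forall lam : int, (k %| lam * a)%Z -> (k %| lam * b)%Z -> (k %| lam)%Z.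

(* phi_k(v) is the class of (a,b) in L_k, i.e. (p mod k, q mod k) = lam (a,b)
   for some unit lam of Z/kZ *)
Definition in_fiber (k a b : int) (v : vtx) : Prop :=
  exists lam : int, coprimez lam k /\
    (v.1 == lam * a %[mod k])%Z /\ (v.2 == lam * b %[mod k])%Z.

(* ideal boundary point of the upper half-plane: None = infinity *)
Definition bpt (R : realType) (v : vtx) : option R :=
  if v.2 == 0 then None else Some (v.1%:~R / v.2%:~R).

Definition geodesic (R : realType) (u v : vtx) (z : R * R) : Prop :=
  0 < z.2 /\
  match bpt R u, bpt R v with
  | Some s, Some t => (z.1 - (s + t) / 2) ^+ 2 + z.2 ^+ 2 = ((s - t) / 2) ^+ 2
  | None, Some t => z.1 = t
  | Some s, None => z.1 = s
  | None, None => False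
  end.

(* Main.v *)
Require Import Defs.
From mathcomp Require Import all_boot all_order all_algebra all_reals zify ring lra.
Import Order.TTheory GRing.Theory Num.Theory.
Local Open Scope ring_scope.


Definition Dz (u v : vtx) : int := u.1 * v.2 - u.2 * v.1.

Lemma unit_pm (l m : int) : m * l = 1 -> l = 1 \/ l = -1.
Proof. move=> H. have := intUnitRing.unitzPl H. lia. Qed.

Lemma sv (u v : vtx) : is_vertex u -> is_vertex v -> Dz u v = 0 -> same_vertex u v.
Proof.
case: u => p q; case: v => p' q'; rewrite /is_vertex /Dz /same_vertex /=.
move=> /coprimezP [[x y] /= hxy] /coprimezP [[x' y'] /= hxy'] hD.
have e1 : forall r : int, r = r * (x * p + y * q) by move=> r; rewrite hxy mulr1.
have hl1 : p' = (x * p' + y * q') * p.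
  rewrite {1}(e1 p'); apply/eqP; rewrite -subr_eq0.
  have -> : p' * (x * p + y * q) - (x * p' + y * q') * p = y * - (p * q' - q * p') by ring.
  by rewrite hD oppr0 mulr0.
have hl2 : q' = (x * p' + y * q') * q.
  rewrite {1}(e1 q'); apply/eqP; rewrite -subr_eq0.
  have -> : q' * (x * p + y * q) - (x * p' + y * q') * q = x * (p * q' - q * p') by ring.
  by rewrite hD mulr0.
have e2 : forall r : int, r = r * (x' * p' + y' * q') by move=> r; rewrite hxy' mulr1.
have hm1 : p = (x' * p + y' * q) * p'.
  rewrite {1}(e2 p); apply/eqP; rewrite -subr_eq0.
  have -> : p * (x' * p' + y' * q') - (x' * p + y' * q) * p' = y' * (p * q' - q * p') by ring.
  by rewrite hD mulr0.
have hm2 : q = (x' * p + y' * q) * q'.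
  rewrite {1}(e2 q); apply/eqP; rewrite -subr_eq0.
  have -> : q * (x' * p' + y' * q') - (x' * p + y' * q) * q' = x' * - (p * q' - q * p') by ring.
  by rewrite hD oppr0 mulr0.
set l := x * p' + y * q' in hl1 hl2.
set m := x' * p + y' * q in hm1 hm2.
have hml : m * l = 1.
  have -> : m * l = m * l * (x * p + y * q) by rewrite hxy mulr1.
  have -> : m * l * (x * p + y * q) = x * (m * (l * p)) + y * (m * (l * q)) by ring.
  by rewrite -hl1 -hm1 -hl2 -hm2.
case: (unit_pm _ _ hml) => hl.
  by left; rewrite hl1 hl2 hl !mul1r.
by right; rewrite hl1 hl2 hl !mulN1r !opprK.
Qed.

Lemma fiber_dvd (k a b : int) (u v : vtx) :
  in_fiber k a b u -> in_fiber k a b v -> (k %| Dz u v)%Z.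
Proof.
move=> [l [_ [h1 h2]]] [m [_ [h3 h4]]].
move: h1 h2 h3 h4; rewrite !eqz_mod_dvd => h1 h2 h3 h4.
have -> : Dz u v = (u.1 - l * a) * v.2 + (l * a) * (v.2 - m * b)
   - ((u.2 - l * b) * v.1 + (l * b) * (v.1 - m * a)) by rewrite /Dz; ring.
apply: rpredB; apply: rpredD; [exact: dvdz_mulr|exact: dvdz_mull|exact: dvdz_mulr|exact: dvdz_mull].
Qed.

Lemma int_key (k D1 D2 d e f g : int) : 0 < k -> `|D1| = k -> `|D2| = k ->
  (k %| d)%Z -> (k %| e)%Z -> (k %| f)%Z -> (k %| g)%Z ->
  D1 * D2 = d * e - f * g ->
  0 <= D1 * D2 * (d * e) -> D1 * D2 * (f * g) <= 0 ->
  d * e = 0 \/ f * g = 0.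
Proof.
move=> hk h1 h2 /dvdzP [d' ->] /dvdzP [e' ->] /dvdzP [f' ->] /dvdzP [g' ->].
have -> : d' * k * (e' * k) = (d' * e') * (k * k) by ring.
have -> : f' * k * (g' * k) = (f' * g') * (k * k) by ring.
have hkk : 0 < k * k by apply: mulr_gt0.
set X := d' * e'; set Y := f' * g'.
have [s [hs hD]] : exists s : int, (s = 1 \/ s = -1) /\ D1 * D2 = s * (k * k).
  { have [->|->] : D1 = k \/ D1 = - k by lia.
    all: have [->|->] : D2 = k \/ D2 = - k by lia.
    - by exists 1; split; [left|ring].
    - by exists (-1); split; [right|ring].
    - by exists (-1); split; [right|ring].
    - by exists 1; split; [left|ring]. }
rewrite hD => hP.
have hs' : s = X - Y.
  apply: (mulIf (lt0r_neq0 hkk)); rewrite hP; ring.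
move=> hX hY.
have hX' : 0 <= s * X.
  have : 0 <= (s * X) * ((k * k) * (k * k)) by rewrite -[_ * _ * _]/(_) ; move: hX; congr (0 <= _); ring.
  by rewrite pmulr_lge0 // mulr_gt0.
have hY' : s * Y <= 0.
  have : (s * Y) * ((k * k) * (k * k)) <= 0 by move: hY; congr (_ <= 0); ring.
  by rewrite pmulr_lle0 // mulr_gt0.
have : X = 0 \/ Y = 0 by nia.
by case=> ->; [left|right]; rewrite mul0r.
Qed.
Section S.
Variable R : realType.
Definition ell (u : vtx) (z : R * R) : R * R :=
  ((u.2)%:~R * z.1 - (u.1)%:~R, (u.2)%:~R * z.2).
Definition dot (a b : R * R) := a.1 * b.1 + a.2 * b.2.
Definition cross (a b : R * R) := a.1 * b.2 - a.2 * b.1.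

Lemma cross_ell u v z : cross (ell u z) (ell v z) = - z.2 * (Dz u v)%:~R.
Proof. rewrite /cross /ell /Dz /= rmorphB /= !rmorphM /=. ring. Qed.

Lemma geoF u v z : geodesic u v z -> 0 < z.2 /\ dot (ell u z) (ell v z) = 0.
Proof.
case: z => x y; rewrite /geodesic /bpt /dot /ell /=.
case: eqP => hq; case: eqP => hq' [hy h]; split => //.
- have -> : (u.2%:~R : R) = 0 by rewrite hq.
  have hq0 : (v.2%:~R : R) != 0 by rewrite intr_eq0; apply/eqP.
  rewrite h; field; exact: hq0.
- have -> : (v.2%:~R : R) = 0 by rewrite hq'.
  have hq0 : (u.2%:~R : R) != 0 by rewrite intr_eq0; apply/eqP.
  rewrite h; field; exact: hq0.
- have hq0 : (u.2%:~R : R) != 0 by rewrite intr_eq0; apply/eqP.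
  have hq0' : (v.2%:~R : R) != 0 by rewrite intr_eq0; apply/eqP.
  set P := (u.1%:~R : R) in h *; set Q := (u.2%:~R : R) in h hq0 *.
  set P' := (v.1%:~R : R) in h *; set Q' := (v.2%:~R : R) in h hq0' *.
  move: h; set s := P / Q; set t := P' / Q' => h.
  have -> : Q * x - P = Q * (x - s) by rewrite /s; field.
  have -> : Q' * x - P' = Q' * (x - t) by rewrite /t; field.
  have -> : Q * (x - s) * (Q' * (x - t)) + Q * y * (Q' * y)
    = Q * Q' * (((x - (s + t) / 2) ^+ 2 + y ^+ 2) - ((s - t) / 2) ^+ 2) by field.
  by rewrite h subrr mulr0.
Qed.

Lemma ell_pos u z : is_vertex u -> 0 < z.2 -> 0 < dot (ell u z) (ell u z).
Proof.
case: z => x y; rewrite /dot /ell /= => hu hy.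
have h1 : 0 <= ((u.2)%:~R * x - (u.1)%:~R) * ((u.2)%:~R * x - (u.1)%:~R) :> R
  by rewrite -expr2 sqr_ge0.
have h2 : 0 <= ((u.2)%:~R * y) * ((u.2)%:~R * y) :> R by rewrite -expr2 sqr_ge0.
case: (eqVneq u.2 0) => hq.
- have hp : u.1 != 0.
    by move: hu; rewrite /is_vertex hq; apply: contraTneq => ->.
  rewrite hq mulr0z.
  rewrite !mul0r add0r addr0 mulrNN -expr2 lt0r sqr_ge0 andbT sqrf_eq0.
  by rewrite intr_eq0.
- have h3 : 0 < ((u.2)%:~R * y) * ((u.2)%:~R * y) :> R.
    by rewrite lt0r h2 andbT !mulf_eq0 orbb intr_eq0 negb_or hq /= gt_eqF.
  lra.
Qed.

Lemma perp (a b : R * R) : 0 < dot a a -> dot a b = 0 ->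
  exists t, b = (- (t * a.2), t * a.1).
Proof.
case: a => a1 a2; case: b => b1 b2; rewrite /dot /= => hN hab.
have hN0 : a1 * a1 + a2 * a2 != 0 by rewrite gt_eqF.
exists ((a1 * b2 - a2 * b1) / (a1 * a1 + a2 * a2)); congr pair.
- apply/eqP; rewrite -subr_eq0.
  have -> : b1 - - ((a1 * b2 - a2 * b1) / (a1 * a1 + a2 * a2) * a2)
     = a1 * (a1 * b1 + a2 * b2) / (a1 * a1 + a2 * a2) by field.
  by rewrite hab mulr0 mul0r.
- apply/eqP; rewrite -subr_eq0.
  have -> : b2 - ((a1 * b2 - a2 * b1) / (a1 * a1 + a2 * a2) * a1)
     = a2 * (a1 * b1 + a2 * b2) / (a1 * a1 + a2 * a2) by field.
  by rewrite hab mulr0 mul0r.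
Qed.
End S.
Arguments ell {R}. Arguments dot {R}. Arguments cross {R}.
Arguments cross_ell {R}. Arguments geoF {R}. Arguments ell_pos {R}. Arguments perp {R}.

Lemma real_part (R : realType) (u1 v1 u2 v2 : vtx) (z : R * R) :
  is_vertex u1 -> is_vertex u2 ->
  geodesic u1 v1 z -> geodesic u2 v2 z -> Dz u1 v1 != 0 -> Dz u2 v2 != 0 ->
  [/\ 0 <= Dz u1 v1 * Dz u2 v2 * (Dz u1 u2 * Dz v1 v2),
      Dz u1 v1 * Dz u2 v2 * (Dz u1 v2 * Dz v1 u2) <= 0,
      Dz u1 u2 * Dz v1 v2 = 0 -> Dz u1 u2 = 0 /\ Dz v1 v2 = 0 &
      Dz u1 v2 * Dz v1 u2 = 0 -> Dz u1 v2 = 0 /\ Dz v1 u2 = 0].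
Proof.
move=> hu1 hu2 /geoF [hy h1] /geoF [_ h2] hD1 hD2.
have hNa := ell_pos _ z hu1 hy; have hNc := ell_pos _ z hu2 hy.
have [t ht] := perp _ _ hNa h1; have [s hs] := perp _ _ hNc h2.
have c1 := cross_ell u1 v1 z; have c2 := cross_ell u2 v2 z.
have c3 := cross_ell v1 v2 z; have c4 := cross_ell u1 v2 z.
have c5 := cross_ell v1 u2 z; have c6 := cross_ell u1 u2 z.
move: hNa hNc c1 c2 c3 c4 c5 c6; rewrite ht hs.
set a := ell u1 z; set c := ell u2 z; set y := z.2.
case: a => a1 a2; case: c => c1 c2; rewrite /cross /dot /= => hNa hNc.
set D1 := Dz u1 v1; set D2 := Dz u2 v2; set d := Dz u1 u2; set e := Dz v1 v2.
set f := Dz u1 v2; set g := Dz v1 u2.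
move=> F1 F2 F3 F4 F5 F6.
set Na := a1 * a1 + a2 * a2 in hNa; set Nc := c1 * c1 + c2 * c2 in hNc.
have E1 : y * D1%:~R = - (t * Na) by rewrite /Na; apply: oppr_inj; rewrite -mulNr -F1; ring.
have E2 : y * D2%:~R = - (s * Nc) by rewrite /Nc; apply: oppr_inj; rewrite -mulNr -F2; ring.
have hy0 : y != 0 by rewrite gt_eqF.
have E3 : (e%:~R : R) = t * s * d%:~R.
  apply: (mulfI hy0); apply: oppr_inj; rewrite -!mulNr -F3.
  have -> : - y * (t * s * d%:~R) = t * s * (- y * d%:~R) by ring.
  rewrite -F6; ring.
set W := a1 * c1 + a2 * c2.
have E4 : y * f%:~R = - (s * W) by apply: oppr_inj; rewrite -mulNr -F4 /W; ring.
have E5 : y * g%:~R = t * W by apply: oppr_inj; rewrite -mulNr -F5 /W; ring.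
have ht0 : t != 0.
  apply: contra_neq hD1 => ht0; apply/eqP; rewrite -(intr_eq0 R).
  by rewrite -(mulrI_eq0 _ (lregP hy0)) E1 ht0 mul0r oppr0.
have hs0 : s != 0.
  apply: contra_neq hD2 => hs0; apply/eqP; rewrite -(intr_eq0 R).
  by rewrite -(mulrI_eq0 _ (lregP hy0)) E2 hs0 mul0r oppr0.
have hy2 : 0 < y ^+ 2 by rewrite exprn_gt0.
split.
- rewrite -(ler0z R) -(pmulr_rge0 _ hy2) !rmorphM /=.
  have -> : y ^+ 2 * ((D1%:~R : R) * D2%:~R * (d%:~R * e%:~R))
     = (y * D1%:~R) * (y * D2%:~R) * d%:~R * e%:~R by ring.
  rewrite E1 E2 E3.
  have -> : - (t * Na) * - (s * Nc) * d%:~R * (t * s * d%:~R)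
     = (t * s * d%:~R) ^+ 2 * (Na * Nc) by ring.
  by rewrite mulr_ge0 // ?sqr_ge0 // mulr_ge0 // ltW.
- rewrite -(lerz0 R) -(pmulr_rle0 _ (mulr_gt0 hy2 hy2)) !rmorphM /=.
  have -> : y ^+ 2 * y ^+ 2 * ((D1%:~R : R) * D2%:~R * (f%:~R * g%:~R))
     = (y * D1%:~R) * (y * D2%:~R) * (y * f%:~R) * (y * g%:~R) by ring.
  rewrite E1 E2 E4 E5.
  have -> : - (t * Na) * - (s * Nc) * - (s * W) * (t * W)
     = - ((t * s * W) ^+ 2 * (Na * Nc)) by ring.
  by rewrite oppr_le0 mulr_ge0 // ?sqr_ge0 // mulr_ge0 // ltW.
- move/eqP; rewrite mulf_eq0 => /orP [/eqP hd | /eqP he].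
  + split => //; apply/eqP; rewrite -(intr_eq0 R) E3 hd mulr0z mulr0 //.
  + split => //; apply/eqP; rewrite -(intr_eq0 R).
    move: E3; rewrite he mulr0z => /esym/eqP; rewrite mulf_eq0 mulf_eq0 (negbTE ht0) (negbTE hs0) //.
- have hW : forall x : int, (y * x%:~R = 0 -> W = 0) -> x = 0 -> f = 0 /\ g = 0 -> True by [].
  move/eqP; rewrite mulf_eq0 => /orP [/eqP hf | /eqP hg].
  + have hW0 : W = 0.
      move: E4; rewrite hf mulr0z mulr0 => /esym/eqP; rewrite oppr_eq0 mulf_eq0 (negbTE hs0) /= => /eqP //.
    split => //; apply/eqP; rewrite -(intr_eq0 R) -(mulrI_eq0 _ (lregP hy0)) E5 hW0 mulr0 //.
  + have hW0 : W = 0.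
      move: E5; rewrite hg mulr0z mulr0 => /esym/eqP; rewrite mulf_eq0 (negbTE ht0) /= => /eqP //.
    split => //; apply/eqP; rewrite -(intr_eq0 R) -(mulrI_eq0 _ (lregP hy0)) E4 hW0 mulr0 oppr0 //.
Qed.

Theorem proposition4p11 (R : realType) (k : int) (hk : 0 < k)
  (a b : int) (hL : admissible k a b)
  (u1 v1 u2 v2 : vtx)
  (hu1 : is_vertex u1) (hv1 : is_vertex v1)
  (hu2 : is_vertex u2) (hv2 : is_vertex v2)
  (fu1 : in_fiber k a b u1) (fv1 : in_fiber k a b v1)
  (fu2 : in_fiber k a b u2) (fv2 : in_fiber k a b v2)
  (e1 : Fk_edge k u1 v1) (e2 : Fk_edge k u2 v2)
  (hdist : ~ (same_vertex u1 u2 /\ same_vertex v1 v2) /\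
           ~ (same_vertex u1 v2 /\ same_vertex v1 u2))
  (z : R * R) :
  ~ (geodesic u1 v1 z /\ geodesic u2 v2 z).
Proof.
move=> [g1 g2].
have n1 : `|Dz u1 v1| = k by exact: e1.
have n2 : `|Dz u2 v2| = k by exact: e2.
have nz1 : Dz u1 v1 != 0 by apply/eqP => h; move: n1; rewrite h normr0 => h0; move: hk; rewrite -h0 ltxx.
have nz2 : Dz u2 v2 != 0 by apply/eqP => h; move: n2; rewrite h normr0 => h0; move: hk; rewrite -h0 ltxx.
have [i1 i2 i3 i4] := real_part _ _ _ _ _ _ hu1 hu2 g1 g2 nz1 nz2.
have pl : Dz u1 v1 * Dz u2 v2 = Dz u1 u2 * Dz v1 v2 - Dz u1 v2 * Dz v1 u2 by rewrite /Dz; ring.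
case: (int_key _ _ _ _ _ _ _ hk n1 n2 (fiber_dvd _ _ _ _ _ fu1 fu2) (fiber_dvd _ _ _ _ _ fv1 fv2) (fiber_dvd _ _ _ _ _ fu1 fv2) (fiber_dvd _ _ _ _ _ fv1 fu2) pl i1 i2).
- move/i3 => [h1 h2]; apply: hdist.1; split; exact: sv.
- move/i4 => [h1 h2]; apply: hdist.2; split; exact: sv.
Qed.
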